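(* Let $(T_n)$ be a sequence of tournaments with $|T_n|\to\infty$ such that $c_3=\lim\mathbf{pr}(C_3,T_n)$ and $c_4=\lim\mathbf{pr}(C_4,T_n)$ exist. Then $$c_4\ge \frac{18c_3^2}{1+8c_3}.$$
   Context: For tournaments $T,H$, $\mathbf{pr}(H,T)$ denotes the probability that a uniformly random set of $|H|$ vertices of $T$ spans a subtournament isomorphic to $H$. $C_3$ is the cyclically oriented triangle and $C_4$ is the $4$-vertex tournament (unique up to isomorphism) containing a directed Hamiltonian $4$-cycle. *)

(* Defs.v *)
From HB Require Import structures.
From mathcomp Require Import all_boot all_order all_algebra.
From mathcomp Require Import all_classical all_reals all_analysis.
Set Implicit Arguments. Unset Strict Implicit. Unset Printing Implicit Defensive.
Import Order.TTheory GRing.Theory Num.Theory.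

Definition tourn_axiom (n : nat) (adj : rel 'I_n) : bool :=
  [forall x, ~~ adj x x] &&
  [forall x, forall y, (x != y) ==> (adj x y != adj y x)].

Record tournament := Tournament {
  tn_size : nat;
  tadj : rel 'I_tn_size;
  tadjP : tourn_axiom tadj }.

Definition spans_iso (H T : tournament) (S : {set 'I_(tn_size T)}) : bool :=
  [exists f : {ffun 'I_(tn_size H) -> 'I_(tn_size T)},
     injectiveb f && (f @: setT == S) &&
     [forall i, forall j, tadj i j == tadj (f i) (f j)]].

Definition ind_count (H T : tournament) : nat :=
  #|[set S : {set 'I_(tn_size T)} | (#|S| == tn_size H) && spans_iso H S]|.

Definition pr {R : realType} (H T : tournament) : R :=
  ((ind_count H T)%:R / ('C(tn_size T, tn_size H))%:R)%R.

Definition C3_adj : rel 'I_3 := fun i j => val j == (val i).+1 %% 3.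
Lemma C3_axiom : tourn_axiom C3_adj.
Proof. apply/andP; split; apply/forallP; case=> [[|[|[|[|]]]] ?] //; apply/forallP; case=> [[|[|[|[|]]]] ?] //. Qed.
Definition C3 : tournament := Tournament C3_axiom.

Definition C4_adj : rel 'I_4 := fun i j =>
  (val i, val j) \in [:: (0,1); (1,2); (2,3); (3,0); (0,2); (1,3)].
Lemma C4_axiom : tourn_axiom C4_adj.
Proof. apply/andP; split; apply/forallP; case=> [[|[|[|[|[|]]]]] ?] //; apply/forallP; case=> [[|[|[|[|[|]]]]] ?] //. Qed.
Definition C4 : tournament := Tournament C4_axiom.

(* Main.v *)
Require Import Defs.
From HB Require Import structures.
From mathcomp Require Import all_boot all_order all_algebra.
From mathcomp Require Import all_classical all_reals all_analysis.
From mathcomp Require Import ring lra zify.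
Import Order.TTheory GRing.Theory Num.Theory numFieldNormedType.Exports.
Set Implicit Arguments. Unset Strict Implicit. Unset Printing Implicit Defensive.

Definition pres (H T : tournament) (f : {ffun 'I_(tn_size H) -> 'I_(tn_size T)}) :=
  [forall i, forall j, tadj i j == tadj (f i) (f j)].
Definition Emb (H T : tournament) := [set f : {ffun 'I_(tn_size H) -> 'I_(tn_size T)} | injectiveb f && pres f].
Definition goodS (H T : tournament) :=
  [set S : {set 'I_(tn_size T)} | (#|S| == tn_size H) && spans_iso H S].

Lemma cardT_cl (T : finType) : #|classical_sets.setT : set T| = #|T|.
Proof. by apply: eq_card => x; rewrite in_setT. Qed.

Lemma emb_aut_count (H T : tournament) :
  #|Emb H T| = (#|Emb H H| * ind_count H T)%N.
Proof.
rewrite /ind_count -/(goodS H T) -sum1_card.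
rewrite (partition_big (fun f : {ffun _ -> _} => f @: setT) (fun S => S \in goodS H T)); last first.
  move=> f; rewrite inE => /andP[/injectiveP fi fp]; rewrite inE; apply/andP; split.
    by rewrite card_imset // cardT_cl card_ord.
  by apply/existsP; exists f; rewrite eqxx andbT; apply/andP; split => //; apply/injectiveP.
rewrite mulnC -sum_nat_const; apply: eq_bigr => S; rewrite inE => /andP[_].
case/existsP=> f0 /andP[/andP[/injectiveP f0i /eqP f0S] f0p].
pose comp (s : {ffun 'I_(tn_size H) -> 'I_(tn_size H)}) := [ffun i => f0 (s i)].
have compi : injective comp.
  move=> s1 s2 /ffunP e; apply/ffunP=> i; apply: f0i; move: (e i); by rewrite !ffunE.
rewrite sum1dep_card -(card_imset _ compi); apply: eq_card => g; rewrite !inE.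
apply/andP/imsetP.
  case=> /andP[/injectiveP gi gp] /eqP gS.
  have ex : forall i, exists j, f0 j == g i.
    move=> i; have : g i \in S by rewrite -gS imset_f // in_setT.
    by rewrite -f0S => /imsetP[j _ ->]; exists j.
  pose s := [ffun i => odflt i [pick j | f0 j == g i]].
  have sE : forall i, f0 (s i) = g i.
    move=> i; rewrite ffunE; case: pickP => [j /eqP //|H0].
    by case: (ex i) => j; rewrite H0.
  exists s; last by apply/ffunP=> i; rewrite ffunE sE.
  rewrite inE; apply/andP; split.
    apply/injectiveP=> i j e; apply: gi; by rewrite -!sE e.
  apply/forallP=> i; apply/forallP=> j.
  move/forallP: gp => /(_ i)/forallP/(_ j)/eqP->.
  by rewrite -!sE; move/forallP: f0p => /(_ (s i))/forallP/(_ (s j))/eqP->.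
case=> s; rewrite inE => /andP[/injectiveP si sp] ->.
split.
  apply/andP; split.
    apply/injectiveP=> i j; rewrite !ffunE => /f0i; exact: si.
  apply/forallP=> i; apply/forallP=> j; rewrite !ffunE.
  move/forallP: sp => /(_ i)/forallP/(_ j)/eqP->.
  by move/forallP: f0p => /(_ (s i))/forallP/(_ (s j)).
rewrite -f0S eqEcard; apply/andP; split.
  apply/fintype.subsetP=> y /imsetP[i _ ->]; rewrite ffunE; apply: imset_f; exact: in_setT.
rewrite !card_imset //; first by move=> i j; rewrite !ffunE => /f0i; exact: si.
Qed.

Lemma tirr (T : tournament) (x : 'I_(tn_size T)) : tadj x x = false.
Proof. by case/andP: (tadjP T) => /forallP/(_ x)/negbTE. Qed.

Lemma ttot (T : tournament) (x y : 'I_(tn_size T)) : x != y -> tadj x y = ~~ tadj y x.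
Proof.
move=> nxy; case/andP: (tadjP T) => _ /forallP/(_ x)/forallP/(_ y).
by rewrite nxy /=; case: (tadj x y); case: (tadj y x).
Qed.

Lemma tasym (T : tournament) (x y : 'I_(tn_size T)) : tadj x y -> tadj y x = false.
Proof.
move=> h; case: (eqVneq x y) => [exy|nxy]; first by move: h; rewrite exy tirr.
by move: h; rewrite ttot // => /negbTE.
Qed.

Lemma pres_inj (H T : tournament) (f : {ffun 'I_(tn_size H) -> 'I_(tn_size T)}) :
  pres f -> injective f.
Proof.
move=> /forallP fp i j e; apply/eqP; apply/negPn/negP => nij.
have := ttot nij; move: (fp i) => /forallP/(_ j)/eqP ->.
move: (fp j) => /forallP/(_ i)/eqP ->; by rewrite e tirr.
Qed.

Lemma EmbE (H T : tournament) f : (f \in Emb H T) = pres f.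
Proof.
rewrite inE; case fp: (pres f); rewrite ?andbF ?andbT //.
by apply/injectiveP; exact: pres_inj.
Qed.

Definition mk3 (n : nat) (t : 'I_n * 'I_n * 'I_n) : {ffun 'I_3 -> 'I_n} :=
  [ffun i : 'I_3 => match val i with 0 => t.1.1 | 1 => t.1.2 | _ => t.2 end].
Definition cyc3 (T : tournament) (t : 'I_(tn_size T) * 'I_(tn_size T) * 'I_(tn_size T)) :=
  tadj t.1.1 t.1.2 && tadj t.1.2 t.2 && tadj t.2 t.1.1.

Definition o3 (k : nat) (h : (k < 3)%N) : 'I_3 := Ordinal h.

Lemma mk3_inj n : injective (@mk3 n).
Proof.
move=> [[a b] c] [[a' b'] c'] /ffunP e.
move: (e (@o3 0 isT)) (e (@o3 1 isT)) (e (@o3 2 isT)); rewrite !ffunE /= => -> -> ->.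
by [].
Qed.

Lemma emb3 (T : tournament) : #|Emb C3 T| = #|[set t | cyc3 (T:=T) t]|.
Proof.
rewrite -(card_imset _ (@mk3_inj _)); apply: eq_card => f; rewrite EmbE.
apply/idP/imsetP.
  move=> /forallP fp; exists (f (o3 (isT : (0 < 3)%N)), f (o3 (isT : (1 < 3)%N)), f (o3 (isT : (2 < 3)%N))).
    rewrite inE /cyc3 /=.
    move: (fp (o3 (isT : (0 < 3)%N))) => /forallP/(_ (o3 (isT : (1 < 3)%N)))/eqP <-.
    move: (fp (o3 (isT : (1 < 3)%N))) => /forallP/(_ (o3 (isT : (2 < 3)%N)))/eqP <-.
    by move: (fp (o3 (isT : (2 < 3)%N))) => /forallP/(_ (o3 (isT : (0 < 3)%N)))/eqP <-.
  apply/ffunP => i; rewrite ffunE.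
  by case: i => [[|[|[|?]]] ?] //=; congr (f _); apply: val_inj.
case=> [[[a b] c]]; rewrite inE /cyc3 /= => /andP[/andP[hab hbc] hca] ->.
apply/forallP=> i; apply/forallP=> j; rewrite !ffunE.
case: i => [[|[|[|?]]] ?] //=; case: j => [[|[|[|?]]] ?] //=;
  by rewrite ?tirr ?hab ?hbc ?hca ?(tasym hab) ?(tasym hbc) ?(tasym hca).
Qed.

Definition mk4 (n : nat) (t : 'I_n * 'I_n * 'I_n * 'I_n) : {ffun 'I_4 -> 'I_n} :=
  [ffun i : 'I_4 => match val i with 0 => t.1.1.1 | 1 => t.1.1.2 | 2 => t.1.2 | _ => t.2 end].
Definition cyc4 (T : tournament) (t : 'I_(tn_size T) * 'I_(tn_size T) * 'I_(tn_size T) * 'I_(tn_size T)) :=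
  [&& tadj t.1.1.1 t.1.1.2, tadj t.1.1.2 t.1.2, tadj t.1.2 t.2, tadj t.2 t.1.1.1,
      tadj t.1.1.1 t.1.2 & tadj t.1.1.2 t.2].

Definition o4 (k : nat) (h : (k < 4)%N) : 'I_4 := Ordinal h.

Lemma mk4_inj n : injective (@mk4 n).
Proof.
move=> [[[a b] c] d] [[[a' b'] c'] d'] /ffunP e.
move: (e (@o4 0 isT)) (e (@o4 1 isT)) (e (@o4 2 isT)) (e (@o4 3 isT)); rewrite !ffunE /= => -> -> -> ->.
by [].
Qed.

Lemma emb4 (T : tournament) : #|Emb C4 T| = #|[set t | cyc4 (T:=T) t]|.
Proof.
rewrite -(card_imset _ (@mk4_inj _)); apply: eq_card => f; rewrite EmbE.
apply/idP/imsetP.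
  move=> /forallP fp; exists (f (o4 (isT : (0 < 4)%N)), f (o4 (isT : (1 < 4)%N)), f (o4 (isT : (2 < 4)%N)), f (o4 (isT : (3 < 4)%N))).
    rewrite inE /cyc4 /=.
    move: (fp (o4 (isT : (0 < 4)%N))) => /forallP fp0.
    move: (fp (o4 (isT : (1 < 4)%N))) => /forallP fp1.
    move: (fp (o4 (isT : (2 < 4)%N))) => /forallP fp2.
    move: (fp (o4 (isT : (3 < 4)%N))) => /forallP fp3.
    move: (fp0 (o4 (isT : (1 < 4)%N))) (fp1 (o4 (isT : (2 < 4)%N))) (fp2 (o4 (isT : (3 < 4)%N)))
      (fp3 (o4 (isT : (0 < 4)%N))) (fp0 (o4 (isT : (2 < 4)%N))) (fp1 (o4 (isT : (3 < 4)%N))).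
    by move=> /eqP <- /eqP <- /eqP <- /eqP <- /eqP <- /eqP <-.
  apply/ffunP => i; rewrite ffunE.
  by case: i => [[|[|[|[|?]]]] ?] //=; congr (f _); apply: val_inj.
case=> [[[[a b] c] d]]; rewrite inE /cyc4 /= => /and5P[hab hbc hcd hda /andP[hac hbd]] ->.
apply/forallP=> i; apply/forallP=> j; rewrite !ffunE.
case: i => [[|[|[|[|?]]]] ?] //=; case: j => [[|[|[|[|?]]]] ?] //=;
  by rewrite ?tirr ?hab ?hbc ?hcd ?hda ?hac ?hbd ?(tasym hab) ?(tasym hbc) ?(tasym hcd) ?(tasym hda) ?(tasym hac) ?(tasym hbd).
Qed.

Lemma card3_sum n (P : 'I_n * 'I_n * 'I_n -> bool) :
  #|[set t | P t]| = (\sum_a \sum_b \sum_c P (a, b, c))%N.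
Proof.
rewrite -sum1_card big_mkcond /= [RHS]pair_bigA [RHS]pair_bigA /=.
by apply: eq_bigr => [[[a b] c]] _; rewrite inE; case: (P _).
Qed.

Lemma card4_sum n (P : 'I_n * 'I_n * 'I_n * 'I_n -> bool) :
  #|[set t | P t]| = (\sum_a \sum_b \sum_c \sum_d P (a, b, c, d))%N.
Proof.
rewrite -sum1_card big_mkcond /= [RHS]pair_bigA [RHS]pair_bigA [RHS]pair_bigA /=.
by apply: eq_bigr => [[[[a b] c] d]] _; rewrite inE; case: (P _).
Qed.

Lemma autC3 : #|Emb C3 C3| = 3.
Proof.
rewrite emb3 card3_sum /=.
rewrite !big_ord_recr !big_ord0 /=. vm_compute. reflexivity.
Qed.

Lemma autC4 : #|Emb C4 C4| = 1.
Proof.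
rewrite emb4 card4_sum /=.
rewrite !big_ord_recr !big_ord0 /=. vm_compute. reflexivity.
Qed.

Local Open Scope ring_scope.

Lemma bR_and (R : pzRingType) (a b : bool) : ((a && b)%:R : R) = a%:R * b%:R.
Proof. by case: a; case: b; rewrite ?mulr0 ?mulr1 ?mul0r. Qed.

Lemma bR_sq (R : pzRingType) (a : bool) : (a%:R : R) * a%:R = a%:R.
Proof. by case: a; rewrite ?mulr0 ?mulr1. Qed.

Lemma bsum (R : pzRingType) (T : tournament) (x y : 'I_(tn_size T)) :
  (tadj x y)%:R + (tadj y x)%:R = (x != y)%:R :> R.
Proof.
case: (eqVneq x y) => [->|nxy]; first by rewrite tirr addr0.
by rewrite (ttot nxy); case: (tadj y x); rewrite ?addr0 ?add0r.
Qed.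

Lemma sum_neq (R : pzRingType) n (v : 'I_n) : \sum_u ((u != v)%:R : R) = n%:R - 1.
Proof.
rewrite (bigD1 v) //= eqxx add0r.
rewrite (eq_bigr (fun _ => 1)); last by move=> u /negbTE ->.
rewrite sumr_const cardC1 card_ord.
case: n v => [|n] v; first by case: v.
by rewrite /= -[n.+1]addn1 natrD addrK.
Qed.

Definition deg (R : pzRingType) (T : tournament) (x : 'I_(tn_size T)) : R :=
  \sum_y (tadj x y)%:R.

Lemma indeg (R : pzRingType) (T : tournament) (v : 'I_(tn_size T)) :
  \sum_u ((tadj u v)%:R : R) = (tn_size T)%:R - 1 - deg R v.
Proof.
rewrite -(sum_neq R v) /deg.
under [X in _ = X - _]eq_bigr do rewrite -bsum.
by rewrite big_split /= addrK.
Qed.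

Lemma sym_sum (R : pzRingType) (T : tournament) (g : 'I_(tn_size T) -> 'I_(tn_size T) -> R) :
  \sum_u \sum_v (tadj u v)%:R * g u v + \sum_u \sum_v (tadj u v)%:R * g v u
  = \sum_u \sum_v (u != v)%:R * g u v.
Proof.
rewrite [X in _ + X]exchange_big -big_split /=; apply: eq_bigr => u _.
rewrite -big_split /=; apply: eq_bigr => v _.
by rewrite -mulrDl bsum.
Qed.

Definition mE (R : pzRingType) (T : tournament) : R := \sum_(u : 'I_(tn_size T)) deg R u.
Definition S2 (R : pzRingType) (T : tournament) : R := \sum_(u : 'I_(tn_size T)) (deg R u) ^+ 2.

Lemma I1 (R : pzRingType) (T : tournament) :
  2 * mE R T = (tn_size T)%:R * ((tn_size T)%:R - 1).
Proof.
rewrite mulr_natl mulr2n {2}/mE /deg exchange_big /mE /deg -big_split /=.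
under eq_bigr do rewrite -big_split /=.
under eq_bigr do under eq_bigr do rewrite bsum eq_sym.
under eq_bigr do rewrite sum_neq.
by rewrite sumr_const card_ord mulr_natl.
Qed.

Lemma I5 (R : comNzRingType) (T : tournament) :
  \sum_(u : 'I_(tn_size T)) \sum_v (tadj u v)%:R * (deg R v - deg R u)
  = ((tn_size T)%:R - 1) * mE R T - 2 * S2 R T.
Proof.
under eq_bigr => u _ do under eq_bigr => v _ do rewrite mulrBr.
under eq_bigr do rewrite sumrB -mulr_suml.
rewrite sumrB exchange_big /=.
under eq_bigr do rewrite -mulr_suml indeg.
rewrite /mE /S2 mulr_sumr mulr_sumr -!sumrB; apply: eq_bigr => u _.
rewrite /deg; ring.
Qed.

Lemma I6 (R : numFieldType) (T : tournament) :
  \sum_(u : 'I_(tn_size T)) \sum_v (tadj u v)%:R * (deg R v - deg R u) ^+ 2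
  = (tn_size T)%:R * S2 R T - mE R T ^+ 2.
Proof.
have h2 : (2 : R) != 0 by rewrite pnatr_eq0.
apply: (mulfI h2); have -> : forall x : R, 2 * x = x + x by move=> x; ring.
have := sym_sum (fun (u v : 'I_(tn_size T)) => (deg R v - deg R u) ^+ 2).
under [X in _ + X = _ -> _]eq_bigr do under eq_bigr do rewrite -sqrrN opprB.
move=> ->.
transitivity (\sum_(u : 'I_(tn_size T)) \sum_(v : 'I_(tn_size T)) (deg R v ^+ 2 - 2 * (deg R u * deg R v) + deg R u ^+ 2)).
  apply: eq_bigr => u _; apply: eq_bigr => v _.
  case: (eqVneq u v) => [->|_]; rewrite ?subrr ?expr0n ?mulr0 ?mul1r; ring.
have k1 : \sum_(u : 'I_(tn_size T)) \sum_(v : 'I_(tn_size T)) deg R v ^+ 2 = (tn_size T)%:R * S2 R T.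
  by rewrite sumr_const card_ord mulr_natl.
have k2 : \sum_(u : 'I_(tn_size T)) \sum_(v : 'I_(tn_size T)) (deg R u * deg R v) = mE R T ^+ 2.
  by rewrite expr2 /mE mulr_suml; apply: eq_bigr => u _; rewrite mulr_sumr.
have k3 : \sum_(u : 'I_(tn_size T)) \sum_(v : 'I_(tn_size T)) deg R u ^+ 2 = (tn_size T)%:R * S2 R T.
  by rewrite exchange_big sumr_const card_ord mulr_natl.
rewrite (@eq_bigr _ _ _ _ _ _ _ (fun u : 'I_(tn_size T) => \sum_(v : 'I_(tn_size T)) deg R v ^+ 2 - \sum_(v : 'I_(tn_size T)) 2 * (deg R u * deg R v) + \sum_(v : 'I_(tn_size T)) deg R u ^+ 2)); last first.
  by move=> u _; rewrite !big_split sumrN.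
rewrite !big_split sumrN k1 k3.
rewrite (@eq_bigr _ _ _ _ _ _ _ (fun u : 'I_(tn_size T) => 2 * \sum_(v : 'I_(tn_size T)) (deg R u * deg R v))); last first.
  by move=> u _; rewrite mulr_sumr.
rewrite -mulr_sumr k2 /=; ring.
Qed.

Definition E3 (R : pzRingType) (T : tournament) : R :=
  \sum_(a : 'I_(tn_size T)) \sum_(b : 'I_(tn_size T)) \sum_(c : 'I_(tn_size T)) (cyc3 (a, b, c))%:R.

Lemma sum_neq_mul (R : pzRingType) n (b : 'I_n) (F : 'I_n -> R) :
  \sum_c (b != c)%:R * F c = \sum_c F c - F b.
Proof.
rewrite [in RHS](bigD1 b) //= addrAC subrr add0r (bigD1 b) //= eqxx mul0r add0r.
by apply: eq_bigr => c; rewrite eq_sym => ->; rewrite mul1r.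
Qed.

Lemma cyc_split (R : pzRingType) (T : tournament) (a b c : 'I_(tn_size T)) :
  ((cyc3 (a, b, c))%:R : R) =
  (tadj a b)%:R * (tadj b c)%:R - (tadj a b)%:R * (tadj b c)%:R * (tadj a c)%:R.
Proof.
rewrite /cyc3 /=; case hab: (tadj a b); last by rewrite /= !mulr0n !mul0r subrr.
case hbc: (tadj b c); last by rewrite /= ?mulr0n ?mulr1n ?mul1r ?mul0r ?mulr0 ?subrr.
have nac : a != c by apply/eqP => eac; move: hbc; rewrite -eac (tasym hab).
rewrite (ttot (T:=T) (x:=c) (y:=a)); last by rewrite eq_sym.
by case: (tadj a c); rewrite /= ?mulr0n ?mulr1n ?mulr1 ?mulr0 ?subr0 ?subrr.
Qed.

Lemma I2 (R : numFieldType) (T : tournament) :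
  2 * E3 R T = (2 * (tn_size T)%:R - 1) * mE R T - 3 * S2 R T.
Proof.
have eQ : \sum_(a : 'I_(tn_size T)) \sum_(b : 'I_(tn_size T)) \sum_(c : 'I_(tn_size T))
    ((tadj a b)%:R * (tadj b c)%:R : R) = ((tn_size T)%:R - 1) * mE R T - S2 R T.
  rewrite exchange_big /=.
  under eq_bigr => b _ do under eq_bigr => a _ do rewrite -mulr_sumr -/(deg R b).
  under eq_bigr => b _ do rewrite -mulr_suml indeg.
  rewrite /mE /S2 mulr_sumr -sumrB; apply: eq_bigr => b _; ring.
have eP : 2 * \sum_(a : 'I_(tn_size T)) \sum_(b : 'I_(tn_size T)) \sum_(c : 'I_(tn_size T))
    ((tadj a b)%:R * (tadj b c)%:R * (tadj a c)%:R : R) = S2 R T - mE R T.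
  rewrite mulr_sumr /S2 /mE -sumrB; apply: eq_bigr => a _.
  have := sym_sum (fun (b c : 'I_(tn_size T)) => ((tadj a b)%:R * (tadj a c)%:R : R)).
  under [X in _ + X = _ -> _]eq_bigr do under eq_bigr do rewrite [(tadj a _)%:R * _]mulrC.
  move=> e.
  have -> : forall x : R, 2 * x = x + x by move=> x; ring.
  rewrite (@eq_bigr _ _ _ _ _ _ _ (fun b : 'I_(tn_size T) => \sum_(c : 'I_(tn_size T)) (tadj b c)%:R * ((tadj a b)%:R * (tadj a c)%:R))); last first.
    by move=> b _; apply: eq_bigr => c _; ring.
  rewrite e.
  under eq_bigr => b _ do rewrite sum_neq_mul bR_sq -mulr_sumr -/(deg R a).
  by rewrite sumrB -mulr_suml -/(deg R a) expr2.
have eE : E3 R T = ((tn_size T)%:R - 1) * mE R T - S2 R T -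
   \sum_(a : 'I_(tn_size T)) \sum_(b : 'I_(tn_size T)) \sum_(c : 'I_(tn_size T))
    ((tadj a b)%:R * (tadj b c)%:R * (tadj a c)%:R : R).
  rewrite -eQ -!sumrB /E3; apply: eq_bigr => a _; rewrite -sumrB; apply: eq_bigr => b _.
  by rewrite -sumrB; apply: eq_bigr => c _; rewrite cyc_split.
rewrite eE mulrBr eP; ring.
Qed.

Definition Af (R : pzRingType) (T : tournament) (u v : 'I_(tn_size T)) : R :=
  \sum_(w : 'I_(tn_size T)) (tadj v w && tadj w u)%:R.

Definition E4 (R : pzRingType) (T : tournament) : R :=
  \sum_(a : 'I_(tn_size T)) \sum_(b : 'I_(tn_size T)) \sum_(c : 'I_(tn_size T))
   \sum_(d : 'I_(tn_size T)) (cyc4 (a, b, c, d))%:R.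

Lemma cyc3_rot (T : tournament) (a b c : 'I_(tn_size T)) : cyc3 (c, a, b) = cyc3 (a, b, c).
Proof. by rewrite /cyc3 /=; case: (tadj c a); case: (tadj a b); case: (tadj b c). Qed.

Lemma I7 (R : comPzRingType) (T : tournament) :
  \sum_(u : 'I_(tn_size T)) \sum_(v : 'I_(tn_size T)) (tadj u v)%:R * Af R u v = E3 R T.
Proof.
rewrite /E3 /Af; apply: eq_bigr => u _; apply: eq_bigr => v _.
by rewrite mulr_sumr; apply: eq_bigr => w _; rewrite /cyc3 /= !bR_and mulrA.
Qed.

Lemma I4 (R : comPzRingType) (T : tournament) :
  \sum_(u : 'I_(tn_size T)) \sum_(v : 'I_(tn_size T)) (tadj u v)%:R * Af R u v * (deg R v - deg R u) = 0.
Proof.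
have e : forall u v : 'I_(tn_size T), (tadj u v)%:R * Af R u v * (deg R v - deg R u) =
   \sum_(w : 'I_(tn_size T)) (cyc3 (u, v, w))%:R * deg R v - \sum_(w : 'I_(tn_size T)) (cyc3 (u, v, w))%:R * deg R u.
  move=> u v; rewrite /Af mulr_sumr mulr_suml -[RHS]sumrB; apply: eq_bigr => w _.
  by rewrite /cyc3 /= !bR_and; ring.
transitivity (\sum_(u : 'I_(tn_size T)) \sum_(v : 'I_(tn_size T)) \sum_(w : 'I_(tn_size T)) (cyc3 (u, v, w))%:R * deg R v
  - \sum_(u : 'I_(tn_size T)) \sum_(v : 'I_(tn_size T)) \sum_(w : 'I_(tn_size T)) (cyc3 (u, v, w))%:R * deg R u).
  rewrite -sumrB; apply: eq_bigr => u _; rewrite -sumrB; apply: eq_bigr => v _; exact: e.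
 apply/eqP; rewrite subr_eq0; apply/eqP.
rewrite exchange_big /=; apply: eq_bigr => v _.
rewrite exchange_big /=; apply: eq_bigr => w _; apply: eq_bigr => u _.
by rewrite cyc3_rot.
Qed.

Lemma Af_sq (R : comPzRingType) (T : tournament) (u v : 'I_(tn_size T)) :
  Af R u v ^+ 2 = 2 * \sum_(w : 'I_(tn_size T)) \sum_(w' : 'I_(tn_size T))
      (tadj w w')%:R * ((tadj v w && tadj w u)%:R * (tadj v w' && tadj w' u)%:R) + Af R u v.
Proof.
set c := fun w : 'I_(tn_size T) => ((tadj v w && tadj w u)%:R : R).
have h := sym_sum (fun w w' : 'I_(tn_size T) => c w * c w').
have e1 : Af R u v ^+ 2 = \sum_(w : 'I_(tn_size T)) \sum_(w' : 'I_(tn_size T)) c w * c w'.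
  by rewrite expr2 /Af mulr_suml; apply: eq_bigr => w _; rewrite mulr_sumr.
have e2 : \sum_(w : 'I_(tn_size T)) \sum_(w' : 'I_(tn_size T)) (w != w')%:R * (c w * c w')
   = \sum_(w : 'I_(tn_size T)) \sum_(w' : 'I_(tn_size T)) c w * c w' - Af R u v.
  rewrite /Af -sumrB; apply: eq_bigr => w _; rewrite sum_neq_mul /c bR_sq //.
rewrite e1 -[X in X = _](subrK (Af R u v)) -e2 -h.
have -> : forall x : R, 2 * x = x + x by move=> x; ring.
congr (_ + _ + _); apply: eq_bigr => w _; apply: eq_bigr => w' _; by rewrite [c w' * _]mulrC.
Qed.

Lemma E4_re (R : comPzRingType) (T : tournament) :
  E4 R T = \sum_(u : 'I_(tn_size T)) \sum_(v : 'I_(tn_size T))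
    \sum_(w : 'I_(tn_size T)) \sum_(w' : 'I_(tn_size T)) (tadj u v)%:R *
      ((tadj w w')%:R * ((tadj v w && tadj w u)%:R * (tadj v w' && tadj w' u)%:R)).
Proof.
rewrite /E4 [RHS]exchange_big /=; apply: eq_bigr => v _.
rewrite [RHS]exchange_big /=; apply: eq_bigr => w _.
rewrite [RHS]exchange_big /=; apply: eq_bigr => w' _; apply: eq_bigr => u _.
by rewrite /cyc4 /= !bR_and; ring.
Qed.

Lemma I3 (R : comPzRingType) (T : tournament) :
  \sum_(u : 'I_(tn_size T)) \sum_(v : 'I_(tn_size T)) (tadj u v)%:R * Af R u v ^+ 2
  = 2 * E4 R T + E3 R T.
Proof.
rewrite E4_re -I7 mulr_sumr -big_split; apply: eq_bigr => u _.
rewrite mulr_sumr -big_split; apply: eq_bigr => v _.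
rewrite Af_sq mulrDr; congr (_ + _).
rewrite mulrCA; congr (_ * _); rewrite mulr_sumr; apply: eq_bigr => w _.
by rewrite mulr_sumr.
Qed.

Lemma CS (R : realFieldType) (I : finType) (w X : I -> R) :
  (forall i, 0 <= w i) ->
  (\sum_i w i * X i) ^+ 2 <= (\sum_i w i) * (\sum_i w i * X i ^+ 2).
Proof.
move=> w0; set S := \sum_i w i; set B := \sum_i w i * X i; set A := \sum_i w i * X i ^+ 2.
have S0 : 0 <= S by apply: sumr_ge0 => i _.
case: (eqVneq S 0) => [Se|Sn].
  have wz : forall i, w i = 0.
    move=> i; apply/eqP; move/eqP: Se; rewrite psumr_eq0 // => /allP/(_ i).
    by rewrite mem_index_enum => /(_ isT) /implyP/(_ isT).
  have B0 : B = 0 by rewrite /B big1 // => i _; rewrite wz mul0r.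
  by rewrite B0 Se expr0n mul0r.
have Sp : 0 < S by rewrite lt_def Sn S0.
set mu := B / S.
have h : 0 <= \sum_i w i * (X i - mu) ^+ 2.
  by apply: sumr_ge0 => i _; apply: mulr_ge0 => //; apply: sqr_ge0.
have e : \sum_i w i * (X i - mu) ^+ 2 = A - 2 * mu * B + mu ^+ 2 * S.
  rewrite /A /B /S !mulr_sumr -sumrB -big_split /=; apply: eq_bigr => i _; ring.
rewrite e in h.
have : 0 <= S * (A - 2 * mu * B + mu ^+ 2 * S) by apply: mulr_ge0.
have -> : S * (A - 2 * mu * B + mu ^+ 2 * S) = S * A - B ^+ 2.
  by rewrite /mu; field.
by rewrite subr_ge0.
Qed.

Lemma dsum_lin3 (R : comPzRingType) (I : finType) (a b c : R) (f g h : I -> I -> R) :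
  \sum_u \sum_v (a * f u v - b * g u v + c * h u v) =
  a * (\sum_u \sum_v f u v) - b * (\sum_u \sum_v g u v) + c * (\sum_u \sum_v h u v).
Proof.
rewrite !mulr_sumr -sumrB -big_split; apply: eq_bigr => u _.
by rewrite !mulr_sumr -sumrB -big_split.
Qed.

Lemma dsum_lin2 (R : comPzRingType) (I : finType) (a b : R) (f g : I -> I -> R) :
  \sum_u \sum_v (a * f u v - b * g u v) =
  a * (\sum_u \sum_v f u v) - b * (\sum_u \sum_v g u v).
Proof.
rewrite !mulr_sumr -sumrB; apply: eq_bigr => u _.
by rewrite !mulr_sumr -sumrB.
Qed.

Lemma finite_CS (R : realFieldType) (T : tournament) (lam : R) :
  ((1 + lam) * E3 R T - lam * (((tn_size T)%:R - 1) * mE R T - 2 * S2 R T)) ^+ 2 <=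
  mE R T * ((1 + lam) ^+ 2 * (2 * E4 R T + E3 R T) + lam ^+ 2 * ((tn_size T)%:R * S2 R T - mE R T ^+ 2)).
Proof.
pose X := fun u v : 'I_(tn_size T) => (1 + lam) * Af R u v - lam * (deg R v - deg R u).
have := @CS _ _ (fun p : 'I_(tn_size T) * 'I_(tn_size T) => ((tadj p.1 p.2)%:R : R))
  (fun p => X p.1 p.2) (fun p => ler0n _ _).
rewrite -(pair_bigA _ (fun u v => ((tadj u v)%:R : R))).
rewrite -(pair_bigA _ (fun u v => ((tadj u v)%:R : R) * X u v)).
rewrite -(pair_bigA _ (fun u v => ((tadj u v)%:R : R) * X u v ^+ 2)).
have -> : \sum_(u : 'I_(tn_size T)) \sum_(v : 'I_(tn_size T)) ((tadj u v)%:R : R) = mE R T by [].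
have -> : \sum_(u : 'I_(tn_size T)) \sum_(v : 'I_(tn_size T)) (tadj u v)%:R * X u v =
    (1 + lam) * E3 R T - lam * (((tn_size T)%:R - 1) * mE R T - 2 * S2 R T).
  rewrite -I7 -I5 -dsum_lin2; apply: eq_bigr => u _; apply: eq_bigr => v _; rewrite /X; ring.
have -> : \sum_(u : 'I_(tn_size T)) \sum_(v : 'I_(tn_size T)) (tadj u v)%:R * X u v ^+ 2 =
    (1 + lam) ^+ 2 * (\sum_(u : 'I_(tn_size T)) \sum_(v : 'I_(tn_size T)) (tadj u v)%:R * Af R u v ^+ 2)
    - (2 * lam * (1 + lam)) * (\sum_(u : 'I_(tn_size T)) \sum_(v : 'I_(tn_size T)) (tadj u v)%:R * Af R u v * (deg R v - deg R u))
    + lam ^+ 2 * (\sum_(u : 'I_(tn_size T)) \sum_(v : 'I_(tn_size T)) (tadj u v)%:R * (deg R v - deg R u) ^+ 2).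
  rewrite -dsum_lin3; apply: eq_bigr => u _; apply: eq_bigr => v _; rewrite /X; ring.
rewrite I3 I4 I6 mulr0 subr0.
by [].
Qed.

Lemma binom3 (R : comNzRingType) k : ('C(k.+4, 3))%:R * 6 = (k.+4)%:R * ((k.+4)%:R - 1) * ((k.+4)%:R - 2) :> R.
Proof.
have e := bin_ffact k.+4 3; rewrite !ffactnS ffactn0 (_ : 3`! = 6) // in e.
have := congr1 (fun x => x%:R : R) e; rewrite /= natrM => ->.
by rewrite !natrM -!natr1; ring.
Qed.

Lemma binom4 (R : comNzRingType) k : ('C(k.+4, 4))%:R * 24 = (k.+4)%:R * ((k.+4)%:R - 1) * ((k.+4)%:R - 2) * ((k.+4)%:R - 3) :> R.
Proof.
have e := bin_ffact k.+4 4; rewrite !ffactnS ffactn0 (_ : 4`! = 24) // in e.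
have := congr1 (fun x => x%:R : R) e; rewrite /= natrM => ->.
by rewrite !natrM -!natr1; ring.
Qed.

Lemma E3_ind (R : pzRingType) (T : tournament) : E3 R T = 3 * (ind_count C3 T)%:R.
Proof.
have := emb_aut_count C3 T; rewrite emb3 card3_sum autC3 => e.
rewrite -natrM -e /E3 natr_sum; apply: eq_bigr => a _; rewrite natr_sum; apply: eq_bigr => b _; by rewrite natr_sum.
Qed.

Lemma E4_ind (R : pzRingType) (T : tournament) : E4 R T = (ind_count C4 T)%:R.
Proof.
have := emb_aut_count C4 T; rewrite emb4 card4_sum autC4 mul1n => e.
rewrite -e /E4 natr_sum; apply: eq_bigr => a _; rewrite natr_sum; apply: eq_bigr => b _; rewrite natr_sum; apply: eq_bigr => c _; by rewrite natr_sum.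
Qed.

Definition Pm (R : realFieldType) (x : R) : R := (1 - x) / 2.
Definition Pe3 (R : realFieldType) (x p : R) : R := p * (1 - x) * (1 - 2 * x) / 2.
Definition Pe4 (R : realFieldType) (x q : R) : R := q * (1 - x) * (1 - 2 * x) * (1 - 3 * x) / 24.
Definition Ps2 (R : realFieldType) (x p : R) : R := ((2 - x) * Pm x - 2 * Pe3 x p) / 3.
Definition Psi (R : realFieldType) (lam x p q : R) : R :=
  Pm x * ((1 + lam) * (1 + lam) * (2 * Pe4 x q + x * Pe3 x p) + lam * lam * (Ps2 x p - Pm x * Pm x))
  - ((1 + lam) * Pe3 x p - lam * ((1 - x) * Pm x - 2 * Ps2 x p)) *
    ((1 + lam) * Pe3 x p - lam * ((1 - x) * Pm x - 2 * Ps2 x p)).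

Lemma alg (R : realFieldType) (lam N p q m e3 e4 s2 c3 c4 : R) : 0 < N ->
  2 * m = N * (N - 1) -> 2 * e3 = (2 * N - 1) * m - 3 * s2 ->
  e3 = 3 * (p * c3) -> c3 * 6 = N * (N - 1) * (N - 2) ->
  e4 = q * c4 -> c4 * 24 = N * (N - 1) * (N - 2) * (N - 3) ->
  ((1 + lam) * e3 - lam * ((N - 1) * m - 2 * s2)) ^+ 2 <=
    m * ((1 + lam) ^+ 2 * (2 * e4 + e3) + lam ^+ 2 * (N * s2 - m ^+ 2)) ->
  0 <= Psi lam N^-1 p q.
Proof.
move=> N0 hm hS h3 hc3 h4 hc4 H.
have Nn : N != 0 by rewrite gt_eqF.
have hm' : m = N * (N - 1) / 2.
  by rewrite -hm; field.
have hc3' : c3 = N * (N - 1) * (N - 2) / 6 by rewrite -hc3; field.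
have hc4' : c4 = N * (N - 1) * (N - 2) * (N - 3) / 24 by rewrite -hc4; field.
have h3s : 3 * s2 = (2 * N - 1) * m - 2 * e3 by rewrite hS; ring.
have hs' : s2 = ((2 * N - 1) * m - 2 * e3) / 3.
  by rewrite -h3s; field.
rewrite hs' in H; rewrite h4 hc4' h3 hc3' hm' in H.
have E : Psi lam N^-1 p q =
  ((N * (N - 1) / 2) * ((1 + lam) ^+ 2 * (2 * (q * (N * (N - 1) * (N - 2) * (N - 3) / 24)) + 3 * (p * (N * (N - 1) * (N - 2) / 6))) +
     lam ^+ 2 * (N * (((2 * N - 1) * (N * (N - 1) / 2) - 2 * (3 * (p * (N * (N - 1) * (N - 2) / 6)))) / 3) - (N * (N - 1) / 2) ^+ 2))
   - ((1 + lam) * (3 * (p * (N * (N - 1) * (N - 2) / 6))) -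
       lam * ((N - 1) * (N * (N - 1) / 2) - 2 * (((2 * N - 1) * (N * (N - 1) / 2) - 2 * (3 * (p * (N * (N - 1) * (N - 2) / 6)))) / 3))) ^+ 2)
  / N ^+ 6.
  by rewrite /Psi /Ps2 /Pm /Pe3 /Pe4; field.
rewrite E; apply: divr_ge0; last by apply: exprn_ge0; apply: ltW.
by rewrite subr_ge0.
Qed.

Lemma psi_T (R : realType) (lam : R) (T : tournament) :
  (4 <= tn_size T)%N -> 0 <= Psi lam (tn_size T)%:R^-1 (pr C3 T) (pr C4 T).
Proof.
move=> h4; have [k hk] : exists k, tn_size T = k.+4 by exists (tn_size T - 4)%N; lia.
have c3n : ('C(tn_size T, 3))%:R != 0 :> R by rewrite pnatr_eq0 -lt0n bin_gt0 hk.
have c4n : ('C(tn_size T, 4))%:R != 0 :> R by rewrite pnatr_eq0 -lt0n bin_gt0 hk.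
apply: (@alg R lam (tn_size T)%:R (pr C3 T) (pr C4 T) (mE R T) (E3 R T) (E4 R T) (S2 R T)
          ('C(tn_size T, 3))%:R ('C(tn_size T, 4))%:R).
- by rewrite hk ltr0Sn.
- exact: I1.
- by rewrite I2.
- by rewrite E3_ind /pr /= divfK.
- by rewrite hk binom3.
- by rewrite E4_ind /pr /= divfK.
- by rewrite hk binom4.
- exact: finite_CS.
Qed.

Local Open Scope classical_set_scope.
Local Open Scope ring_scope.

Lemma fin_alg (R : realFieldType) (c d : R) : 0 <= c ->
  0 <= Psi (6 * c / (1 + 2 * c)) 0 c d -> 18 * c ^+ 2 / (1 + 8 * c) <= d.
Proof.
move=> c0 h.
have p2 : 0 < 1 + 2 * c by lra.
have p8 : 0 < 1 + 8 * c by lra.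
have n2 : 1 + 2 * c != 0 by rewrite gt_eqF.
have E : Psi (6 * c / (1 + 2 * c)) 0 c d =
  ((1 + 8 * c) / (24 * (1 + 2 * c) ^+ 2)) * (d * (1 + 8 * c) - 18 * c ^+ 2).
  by rewrite /Psi /Ps2 /Pm /Pe3 /Pe4; field.
rewrite E pmulr_rge0 ?subr_ge0 in h; last first.
  by apply: divr_gt0 => //; apply: mulr_gt0 => //; apply: exprn_gt0.
by rewrite ler_pdivrMr.
Qed.

Lemma Psi_cvg (R : realType) (lam : R) (x p q : nat -> R) (c d : R) :
  x @ \oo --> 0 -> p @ \oo --> c -> q @ \oo --> d ->
  (fun m => Psi lam (x m) (p m) (q m)) @ \oo --> Psi lam 0 c d.
Proof.
move=> hx hp hq.
have hm : (fun m => Pm (x m)) @ \oo --> Pm (0 : R).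
  rewrite /Pm; repeat first [exact: hx | exact: cvg_cst | apply: cvgM | apply: cvgB | apply: cvgD].
have he3 : (fun m => Pe3 (x m) (p m)) @ \oo --> Pe3 0 c.
  rewrite /Pe3; repeat first [exact: hx | exact: hp | exact: cvg_cst | apply: cvgM | apply: cvgB | apply: cvgD].
have he4 : (fun m => Pe4 (x m) (q m)) @ \oo --> Pe4 0 d.
  rewrite /Pe4; repeat first [exact: hx | exact: hq | exact: cvg_cst | apply: cvgM | apply: cvgB | apply: cvgD].
have hs2 : (fun m => Ps2 (x m) (p m)) @ \oo --> Ps2 0 c.
  rewrite /Ps2; repeat first [exact: hm | exact: he3 | exact: hx | exact: cvg_cst | apply: cvgM | apply: cvgB | apply: cvgD].
rewrite /Psi; repeat first [exact: hm | exact: he3 | exact: he4 | exact: hs2 | exact: hx | exact: cvg_cst | apply: cvgM | apply: cvgB | apply: cvgD].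
Qed.

Lemma pr_ge0 (R : realType) (H T : tournament) : 0 <= (pr H T : R).
Proof. by rewrite /pr divr_ge0 ?ler0n. Qed.

Unset Implicit Arguments.
Local Open Scope classical_set_scope.
Local Open Scope ring_scope.

Theorem lemma2p5 (R : realType) (T : nat -> tournament) (c3 c4 : R) :
  (forall M : nat, exists N : nat, forall m : nat, (N <= m)%N -> (M <= tn_size (T m))%N) ->
  (fun m => pr C3 (T m) : R) @ \oo --> c3 ->
  (fun m => pr C4 (T m) : R) @ \oo --> c4 ->
  18 * c3 ^+ 2 / (1 + 8 * c3) <= c4.
Proof.
move=> hT h3 h4.
have hx : (fun m => (tn_size (T m))%:R^-1 : R) @ \oo --> 0.
  apply/cvgr0Pnorm_lt => eps eps0.
  have [N0 hN0] := hT (Num.truncn eps^-1).+1.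
  near=> m.
  have hm : (N0 <= m)%N by near: m; exact: nbhs_infty_ge.
  have hn := hN0 m hm.
  have lt1 : eps^-1 < (tn_size (T m))%:R.
    apply: (lt_le_trans (truncnS_gt _)); by rewrite ler_nat.
  have np : 0 < (tn_size (T m))%:R :> R by apply: le_lt_trans lt1; rewrite invr_ge0 ltW.
  rewrite ger0_norm ?invr_ge0 ?ltW //.
  by rewrite invf_plt // .
have c3ge : 0 <= c3.
  apply: (cvgr_to_ge h3); near=> m; exact: pr_ge0.
apply: fin_alg => //.
apply: (cvgr_to_ge (Psi_cvg (lam := 6 * c3 / (1 + 2 * c3)) hx h3 h4)).
have [N0 hN0] := hT 4%N.
near=> m; apply: psi_T; apply: hN0; near: m; exact: nbhs_infty_ge.
Unshelve. all: by end_near.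
Qed.
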